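(* Let $G$ be a finite simple graph and let $q \ge p \ge 0$ be integers. Then $\alpha_q(G) \le \left\lceil \frac{q+1}{p+1} \right\rceil \alpha_p(G)$.
   Context: For a graph $G=(V,E)$ and an integer $k\ge 0$, a $k$-independent set is a set $S\subseteq V$ such that the induced subgraph $G[S]$ has maximum degree at most $k$; $\alpha_k(G)$ denotes the maximum cardinality of a $k$-independent set of $G$ (so $\alpha_0(G)$ is the usual independence number). *)

(* Defs.v *)
From mathcomp Require Import all_boot.
Set Implicit Arguments. Unset Strict Implicit. Unset Printing Implicit Defensive.

Definition simple_graph (T : finType) (e : rel T) : Prop :=
  symmetric e /\ irreflexive e.

Definition k_independent (T : finType) (e : rel T) (k : nat) (S : {set T}) : bool :=
  [forall x in S, #|[set y in S | e x y]| <= k].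

(* alpha_k(G): maximum cardinality of a k-independent set (the empty set is
   always k-independent, so the max is over a nonempty family). *)
Definition alpha_k (T : finType) (e : rel T) (k : nat) : nat :=
  \max_(S : {set T} | k_independent e k S) #|S|.

Definition ceil_div (m d : nat) : nat := (m + d.-1) %/ d.

(* Main.v *)
Require Import Defs.
From mathcomp Require Import all_boot.
From mathcomp Require Import zify.
Set Implicit Arguments. Unset Strict Implicit.

Definition degc (T : finType) (e : rel T) (S : {set T}) (c : nat)
  (f : {ffun T -> 'I_c}) (x : T) (k : 'I_c) : nat :=
  \sum_(y in S) (e x y && (f y == k)).

Definition cost (T : finType) (e : rel T) (S : {set T}) (c : nat)
  (f : {ffun T -> 'I_c}) : nat :=
  \sum_(x in S) degc e S f x (f x).

Lemma degc_card (T : finType) (e : rel T) (S : {set T}) (c : nat)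
  (f : {ffun T -> 'I_c}) x k :
  #|[set y in [set z in S | f z == k] | e x y]| = degc e S f x k.
Proof.
rewrite /degc -sum1_card big_mkcond [RHS]big_mkcond /=.
apply: eq_bigr => y _; rewrite !inE.
by case: (y \in S); case: (f y == k); case: (e x y).
Qed.

Lemma degc_swap (T : finType) (e : rel T) (S : {set T}) (c : nat)
  (f : {ffun T -> 'I_c}) (v : T) (j : 'I_c) x k :
  v \in S ->
  degc e S [ffun z => if z == v then j else f z] x k + (e x v && (f v == k))
  = degc e S f x k + (e x v && (j == k)).
Proof.
move=> vS; rewrite /degc (bigD1 v vS) [X in _ = X + _](bigD1 v vS) /= ffunE eqxx.
have -> : \sum_(i in S | i != v) (e x i && ([ffun z => if z == v then j else f z] i == k))
  = \sum_(i in S | i != v) (e x i && (f i == k)).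
  by apply: eq_bigr => i /andP[_ /negbTE iv]; rewrite ffunE iv.
by rewrite addnAC [RHS]addnC addnA.
Qed.

Lemma sum_degc (T : finType) (e : rel T) (S : {set T}) (c : nat)
  (f : {ffun T -> 'I_c}) x :
  \sum_(k < c) degc e S f x k = #|[set y in S | e x y]|.
Proof.
rewrite /degc exchange_big /= -sum1_card big_mkcond [RHS]big_mkcond /=.
apply: eq_bigr => y _; rewrite inE; case: (y \in S) => //.
rewrite (bigD1 (f y)) //= eqxx big1 ?addn0; first by case: (e x y).
by move=> k /negbTE kn; rewrite eq_sym kn andbF.
Qed.

Lemma cost_split (T : finType) (e : rel T) (S : {set T}) (c : nat)
  (g : {ffun T -> 'I_c}) (v : T) : v \in S ->
  cost e S g = degc e S g v (g v) + \sum_(i in S | i != v) degc e S g i (g i).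
Proof. by move=> vS; rewrite /cost (bigD1 v vS). Qed.

Lemma cost_swap (T : finType) (e : rel T) (S : {set T}) (c : nat)
  (f : {ffun T -> 'I_c}) (v : T) (j : 'I_c) :
  symmetric e -> irreflexive e -> v \in S ->
  cost e S [ffun z => if z == v then j else f z] + 2 * degc e S f v (f v)
  = cost e S f + 2 * degc e S f v j.
Proof.
move=> sy ir vS.
set f' := [ffun z => if z == v then j else f z].
have hv := degc_swap e f j v j vS.
rewrite ir /= in hv.
have hv2 := degc_swap e f j v (f v) vS.
rewrite ir /= in hv2.
rewrite (cost_split e f' vS) (cost_split e f vS).
have -> : f' v = j by rewrite /f' ffunE eqxx.
rewrite -/f' in hv.
have hs : \sum_(i in S | i != v) degc e S f' i (f' i) + degc e S f v (f v)
  = \sum_(i in S | i != v) degc e S f i (f i) + degc e S f v j.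
  have a1 : degc e S f v (f v) = \sum_(i in S | i != v) (e i v && (f v == f i)).
    rewrite /degc (bigD1 v vS) /= ir /=.
    by apply: eq_bigr => i _; rewrite sy eq_sym.
  have a2 : degc e S f v j = \sum_(i in S | i != v) (e i v && (j == f i)).
    rewrite /degc (bigD1 v vS) /= ir /=.
    by apply: eq_bigr => i _; rewrite sy eq_sym.
  rewrite a1 a2 -!big_split /=.
  apply: eq_bigr => i /andP[_ /negbTE iv].
  have -> : f' i = f i by rewrite /f' ffunE iv.
  exact: degc_swap.
lia.
Qed.

Theorem mainTheorem1 (T : finType) (e : rel T) (p q : nat) :
  simple_graph e -> p <= q ->
  alpha_k e q <= ceil_div q.+1 p.+1 * alpha_k e p.
Proof.
move=> [sy ir] pq.
set c := ceil_div q.+1 p.+1.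
have cbig : q.+1 <= c * p.+1.
  rewrite /c /ceil_div /=.
  have := divn_eq (q.+1 + p) p.+1; have := ltn_mod (q.+1 + p) p.+1; lia.
have cpos : 0 < c by move: cbig; case: (c) => //.
apply/bigmax_leqP => S Sq.
pose f0 : {ffun T -> 'I_c} := [ffun _ => Ordinal cpos].
case: (@arg_minnP _ f0 xpredT (@cost T e S c) isT) => f _ fmin.
have good : forall v, v \in S -> degc e S f v (f v) <= p.
  move=> v vS; rewrite leqNgt; apply/negP => big.
  have [j jle] : exists j, degc e S f v j <= p.
    apply/existsP; rewrite -[X in is_true X]negbK; apply/negP => /existsPn H.
    have : \sum_(k < c) p.+1 <= \sum_(k < c) degc e S f v k.
      by apply: leq_sum => k _; move: (H k); rewrite leqNgt negbK.
    rewrite sum_degc sum_nat_const card_ord.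
    move/forallP: Sq => /(_ v); rewrite vS /= => Hq.
    lia.
  have := fmin [ffun z => if z == v then j else f z] isT.
  have := cost_swap f j sy ir vS.
  move=> H1 H2; have := leq_add H2 (leqnn (2 * degc e S f v (f v))).
  rewrite H1 leq_add2l => H3.
  have : degc e S f v (f v) <= degc e S f v j by rewrite -(leq_pmul2l (isT : 0 < 2)).
  move=> H4; have := leq_ltn_trans H4 (leq_ltn_trans jle big).
  by rewrite ltnn.
have -> : #|S| = \sum_(k < c) #|[set x in S | f x == k]|.
  rewrite -sum1_card (partition_big (fun x => f x) xpredT) //=.
  apply: eq_bigr => k _; rewrite -sum1_card; apply: eq_bigl => x.
  by rewrite inE.
rewrite -[X in _ <= X * _]card_ord -sum_nat_const.
apply: leq_sum => k _; apply: leq_bigmax_cond.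
apply/forallP => x; apply/implyP; rewrite inE => /andP[xS /eqP fx].
by rewrite degc_card -fx; apply: good.
Qed.
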